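(* Let $k\ge1$, let $K=\Delta_n^{(k)}$ be the $k$-skeleton of the $n$-simplex, let $M$ be a closed PL $2k$-manifold, and let $\psi\colon C_k(K;\mathbb{Z}_2)\to H_k(M;\mathbb{Z}_2)$ be a homomorphism. Let $J$ be an induced subcomplex of $K$ on $2k+3$ vertices. Then for every vertex $v$ of $J$, $$\sum_{\{\sigma',\tau'\}\in P_J}\Omega(\psi(\sigma'),\psi(\tau'))=\sum_{\{\sigma,\tau\}\in P_{J,v}}\Omega\big(\psi(\partial(\sigma*\{v\})),\psi(\partial(\tau*\{v\}))\big),$$ where $P_J$ is the set of unordered pairs $\{\sigma',\tau'\}$ of disjoint $k$-simplices of $J$, $P_{J,v}$ is the set of unordered pairs $\{\sigma,\tau\}$ of disjoint $k$-simplices of $J$ not containing $v$, and $\sigma*\{v\}$ is the $(k+1)$-simplex spanned by the vertices of $\sigma$ and $v$.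
   Context: All coefficients are $\mathbb{Z}_2$. $\Omega$ is the mod-2 intersection form of $M$ on $H_k(M;\mathbb{Z}_2)$, a symmetric bilinear form. For a $(k+1)$-simplex $\kappa$, $\partial\kappa\in C_k(K;\mathbb{Z}_2)$ is the sum of its $k$-faces. *)

(* Defs.v *)
From HB Require Import structures.
From mathcomp Require Import all_boot all_order all_algebra.
Set Implicit Arguments. Unset Strict Implicit. Unset Printing Implicit Defensive.
Import GRing.Theory.
Local Open Scope ring_scope.

(* Vertices of the n-simplex Delta_n are 'I_n.+1; a vertex set is 'I_m below. *)
Notation simplex m d := {A : {set 'I_m} | #|A| == d.+1}.

Notation chain m d := {ffun simplex m d -> ('F_2)^o}.

Definition echain (m d : nat) (s : simplex m d) : chain m d :=
  [ffun t : simplex m d => ((t == s) : nat)%:R].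

(* Boundary of a (d+1)-simplex kappa (given by its vertex set of size d+2):
   the sum of its d-faces, i.e. of the d-simplices contained in kappa. *)
Definition bnd (m d : nat) (kappa : {set 'I_m}) : chain m d :=
  [ffun t : simplex m d => ((val t \subset kappa) : nat)%:R].

(* Main.v *)
From HB Require Import structures.
From mathcomp Require Import all_boot all_order all_algebra.
From mathcomp Require Import zify.
Require Import Defs.
Set Implicit Arguments. Unset Strict Implicit. Unset Printing Implicit Defensive.
Lemma count_core (T : finType) (K : nat) (W A B : {set T}) (HW : #|W| = (K + K)%N)
  (AW : A \subset W) (BW : B \subset W) (AB : A :&: B = set0) (HA : #|A| <= K) :
  #|[set p : {S : {set T} | #|S| == K} * {S : {set T} | #|S| == K} |
     [&& val p.1 \subset W, val p.2 \subset W, val p.1 :&: val p.2 == set0,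
         A \subset val p.1 & B \subset val p.2]]|
  = 'C(K + K - #|A| - #|B|, K - #|A|).
Proof.
set D := [set p | _].
have tE : forall p, p \in D -> val p.2 = W :\: val p.1.
  move=> p; rewrite inE => /and5P[sW tW /eqP st _ _].
  apply/eqP; rewrite eqEcard; apply/andP; split.
    apply/subsetP=> x xt; rewrite !inE (subsetP tW x xt) andbT.
    apply/negP=> xs; have : x \in val p.1 :&: val p.2 by rewrite inE xs xt.
    by rewrite st inE.
  rewrite cardsDS // HW (eqP (valP p.1)) (eqP (valP p.2)); lia.
have sE : forall p, p \in D -> val p.1 = (val p.1 :\: A) :|: A.
  move=> p; rewrite inE => /and5P[_ _ _ As _].
  apply/setP=> x; rewrite !inE; case xA: (x \in A); last by rewrite /= orbF.
  by rewrite orbT (subsetP As x xA).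
pose f := fun p : {S : {set T} | #|S| == K} * {S : {set T} | #|S| == K} =>
  val p.1 :\: A.
have inj : {in D &, injective f}.
  move=> p q hp hq e.
  have e1 : val p.1 = val q.1 by rewrite (sE p hp) (sE q hq) /f; congr (_ :|: _).
  have e2 : val p.2 = val q.2 by rewrite (tE p hp) (tE q hq) e1.
  move: p q e1 e2 {hp hq e} => [p1 p2] [q1 q2] /= e1 e2.
  by congr pair; apply: val_inj.
have img : f @: D = [set X : {set T} | X \subset W :\: (A :|: B) & #|X| == K - #|A|].
  apply/setP => X; rewrite inE; apply/imsetP/idP.
    case=> p hp ->; have hp' := hp; rewrite inE in hp'.
    case/and5P: hp' => sW tW /eqP st As Bt.
    apply/andP; split; last by rewrite /f cardsDS // (eqP (valP p.1)).
    apply/subsetP=> x; rewrite !inE => /andP[xA xs].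
    rewrite (subsetP sW x xs) andbT negb_or xA /=.
    apply/negP=> xB; have : x \in val p.1 :&: val p.2.
      by rewrite inE xs (subsetP Bt x xB).
    by rewrite st inE.
  case/andP => XR /eqP XK.
  have XA : X :&: A = set0.
    apply/setP=> x; rewrite !inE; apply/negbTE/negP=> /andP[xX xA].
    by move: (subsetP XR x xX); rewrite !inE xA.
  have sW : X :|: A \subset W.
    rewrite subUset AW andbT; apply: subset_trans XR _; exact: subsetDl.
  have hs : #|X :|: A| == K by rewrite cardsU XA cards0 XK; apply/eqP; lia.
  have ht : #|W :\: (X :|: A)| == K by rewrite cardsDS // HW (eqP hs); apply/eqP; lia.
  exists (exist (fun S : {set T} => #|S| == K) _ hs, exist (fun S : {set T} => #|S| == K) _ ht).
    rewrite inE /= sW subsetDl /=; apply/and3P; split.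
    - apply/eqP/setP=> x; rewrite !inE; by case: (x \in X); case: (x \in A); case: (x \in W).
    - exact: subsetUr.
    - apply/subsetP=> x xB; rewrite !inE (subsetP BW x xB) andbT.
      apply/negP=> /orP[xX|xA].
        by move: (subsetP XR x xX); rewrite !inE xB orbT.
      have : x \in A :&: B by rewrite inE xA xB.
      by rewrite AB inE.
  rewrite /f /=; apply/setP=> x; rewrite !inE.
  case xA: (x \in A); last by rewrite /= orbF.
  rewrite /=; case xX: (x \in X) => //.
  have : x \in X :&: A by rewrite inE xX xA.
  by rewrite XA inE.
rewrite -(card_in_imset inj) img cards_draws; congr 'C(_, _).
rewrite cardsDS ?subUset ?AW ?BW // cardsU AB cards0 HW; lia.
Qed.
Import GRing.Theory.
Local Open Scope ring_scope.

Definition ind (b : bool) : 'F_2 := (b : nat)%:R.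
Lemma indM b1 b2 : ind (b1 && b2) = ind b1 * ind b2.
Proof. by case: b1; case: b2; rewrite /ind /= ?mul1r ?mul0r. Qed.
Lemma ind1 : ind true = 1. Proof. by []. Qed.
Lemma ind0 : ind false = 0. Proof. by []. Qed.

Lemma big_ind (I : finType) (P : pred I) (F : I -> 'F_2) :
  \sum_(i | P i) F i = \sum_i ind (P i) * F i.
Proof. by rewrite big_mkcond; apply: eq_bigr => i _; case: (P i); rewrite /ind /= ?mul1r ?mul0r. Qed.

Lemma sum_ind (I : finType) (P : pred I) : \sum_i ind (P i) = (#|[set i | P i]|)%:R.
Proof.
rewrite -sumr_const [RHS]big_mkcond /=; apply: eq_bigr => i _.
by rewrite inE; case: (P i).
Qed.

Lemma two0 : (2%:R : 'F_2) = 0. Proof. by apply/eqP. Qed.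

Lemma sym_split (I : finType) (h g : I -> I -> 'F_2) (gC : forall a b, g a b = g b a) :
 \sum_a \sum_b h a b * g a b =
 \sum_a \sum_b ind (enum_rank a < enum_rank b)%N * (h a b + h b a) * g a b
 + \sum_a h a a * g a a.
Proof.
have sp : forall a b, h a b * g a b = ind (enum_rank a < enum_rank b)%N * h a b * g a b
   + ind (enum_rank b < enum_rank a)%N * h a b * g a b + ind (a == b) * h a b * g a b.
  move=> a b; case: (ltngtP (enum_rank a) (enum_rank b)) => hab.
  - have -> : (a == b) = false.
      by apply/negbTE/negP=> /eqP e; move: hab; rewrite e ltnn.
    by rewrite ind1 ind0 !mul1r !mul0r !addr0.
  - have -> : (a == b) = false.
      by apply/negbTE/negP=> /eqP e; move: hab; rewrite e ltnn.
    by rewrite ind1 ind0 !mul1r !mul0r add0r addr0.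
  - have e : a = b by apply: enum_rank_inj; apply: val_inj.
    by rewrite e eqxx ind1 ind0 !mul1r !mul0r !add0r.
under eq_bigr do under eq_bigr do rewrite sp.
under eq_bigr do rewrite !big_split /=.
rewrite !big_split /=.
have e2 : \sum_a \sum_b ind (enum_rank b < enum_rank a)%N * h a b * g a b
  = \sum_a \sum_b ind (enum_rank a < enum_rank b)%N * h b a * g a b.
  rewrite exchange_big /=; apply: eq_bigr => a _; apply: eq_bigr => b _.
  by rewrite gC.
have e3 : \sum_a \sum_b ind (a == b) * h a b * g a b = \sum_a h a a * g a a.
  apply: eq_bigr => a _; rewrite (bigD1 a) //= eqxx ind1 mul1r big1 ?addr0 //.
  by move=> b /negbTE; rewrite eq_sym => ->; rewrite ind0 !mul0r.
rewrite e2 e3; congr (_ + _); rewrite -big_split /=; apply: eq_bigr => a _.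
rewrite -big_split /=; apply: eq_bigr => b _.
by rewrite mulrDr mulrDl.
Qed.

Lemma bndE m d (X : {set 'I_m}) :
  bnd d X = \sum_(a : simplex m d | val a \subset X) echain a.
Proof.
apply/ffunP=> t; rewrite sum_ffunE ffunE.
case: (boolP (val t \subset X)) => h.
  rewrite (bigD1 t) //= ffunE eqxx big1 ?addr0 // => a /andP[_ ne].
  by rewrite ffunE eq_sym (negbTE ne).
rewrite big1 // => a ha; rewrite ffunE; case: eqP => // e.
by move: h; rewrite e ha.
Qed.

Lemma subD1U (T : finType) (v : T) (a s : {set T}) :
  (a \subset v |: s) = (a :\ v \subset s).
Proof.
apply/subsetP/subsetP => h x.
  by rewrite inE => /andP[xv xa]; move: (h x xa); rewrite inE (negbTE xv).
move=> xa; rewrite !inE; case: (eqVneq x v) => //= xv; apply: h.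
by rewrite !inE xv xa.
Qed.

Lemma swap4 (I J : finType) (F : I -> I -> J -> J -> 'F_2) :
  \sum_s \sum_t \sum_a \sum_b F s t a b = \sum_a \sum_b \sum_s \sum_t F s t a b.
Proof.
transitivity (\sum_(q : J * J) \sum_(p : I * I) F p.1 p.2 q.1 q.2).
  rewrite pair_bigA /=; under eq_bigr => p _ do rewrite pair_bigA /=.
  by rewrite exchange_big.
by rewrite [RHS]pair_bigA /=; apply: eq_bigr => q _; rewrite pair_bigA.
Qed.

Lemma count_PP n k (W : {set 'I_n}) v (Hv : v \in W) (HW : #|W| = (2 * k + 3)%N)
  (a b : simplex n k) :
  \sum_(s : simplex n k) \sum_(t : simplex n k)
     ind [&& val s \subset W, val t \subset W, val s :&: val t == set0,
             v \notin val s & v \notin val t]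
     * ind (val a \subset v |: val s) * ind (val b \subset v |: val t)
  = ind [&& val a \subset W, val b \subset W & val a :&: val b == set0].
Proof.
under eq_bigr do under eq_bigr do rewrite -!indM.
rewrite pair_bigA /= sum_ind.
case: (boolP [&& val a \subset W, val b \subset W &
                (val a :\ v) :&: (val b :\ v) == set0]) => [/and3P[aW bW /eqP AB] | hc].
  rewrite (_ : [set p | _] = [set p : simplex n k * simplex n k |
     [&& val p.1 \subset W :\ v, val p.2 \subset W :\ v, val p.1 :&: val p.2 == set0,
         val a :\ v \subset val p.1 & val b :\ v \subset val p.2]]); last first.
    apply/setP=> p; rewrite !inE !subsetD1 !subD1U.
    move: (val p.1 \subset W) (val p.2 \subset W) (v \in val p.1) (v \in val p.2)
      (val p.1 :&: val p.2 == set0) (val a :\ v \subset val p.1) (val b :\ v \subset val p.2).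
    by do 7!case.
  have HW' : #|W :\ v| = (k.+1 + k.+1)%N by move: (cardsD1 v W); rewrite Hv HW; lia.
  have AW : val a :\ v \subset W :\ v by apply: setSD.
  have BW : val b :\ v \subset W :\ v by apply: setSD.
  have HA : (#|val a :\ v| <= k.+1)%N by have := cardsD1 v (val a); rewrite (eqP (valP a)); lia.
  rewrite count_core // aW bW /=.
  have Eab : (val a :&: val b == set0) = ~~ ((v \in val a) && (v \in val b)).
    apply/idP/idP.
      move/eqP=> e; apply/negP=> /andP[va vb].
      have : v \in val a :&: val b by rewrite inE va vb.
      by rewrite e inE.
    move=> h; apply/eqP/setP=> x; rewrite !inE; apply/negbTE/negP=> /andP[xa xb].
    case: (eqVneq x v) => [e|xv].
      by move: h; rewrite -e xa xb.
    have : x \in (val a :\ v) :&: (val b :\ v) by rewrite !inE xv xa xb.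
    by rewrite AB inE.
  rewrite Eab.
  have ca : #|val a| = k.+1 := eqP (valP a).
  have cb : #|val b| = k.+1 := eqP (valP b).
  move: (cardsD1 v (val a)) (cardsD1 v (val b)) ca cb.
  move: #|val a| #|val b| #|val a :\ v| #|val b :\ v| => x y na nb.
  case: (v \in val a); case: (v \in val b) => /= ha hb ca cb.
  - have -> : (k.+1 + k.+1 - na - nb)%N = 2%N by lia.
    have -> : (k.+1 - na)%N = 1%N by lia.
    by rewrite bin1 two0.
  - have -> : (k.+1 + k.+1 - na - nb)%N = 1%N by lia.
    have -> : (k.+1 - na)%N = 1%N by lia.
    by rewrite bin1.
  - have -> : (k.+1 + k.+1 - na - nb)%N = 1%N by lia.
    have -> : (k.+1 - na)%N = 0%N by lia.
    by rewrite bin0.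
  - have -> : (k.+1 + k.+1 - na - nb)%N = 0%N by lia.
    have -> : (k.+1 - na)%N = 0%N by lia.
    by rewrite bin0.
rewrite (_ : #|_| = 0%N); last first.
  apply/eqP; rewrite cards_eq0; apply/eqP/setP => p; rewrite !inE.
  apply/negbTE/negP => /andP[/andP[/and5P[sW tW /eqP st vs vt] aS] bT].
  move/negP: hc; apply; apply/and3P; split.
  - by apply: subset_trans aS _; rewrite subUset sub1set Hv sW.
  - by apply: subset_trans bT _; rewrite subUset sub1set Hv tW.
  - apply/eqP/setP => x; rewrite !inE; apply/negbTE/negP => /andP[/andP[xv xa] /andP[_ xb]].
    move: (subsetP aS x xa) (subsetP bT x xb); rewrite !inE (negbTE xv) /= => xs xt.
    have : x \in val p.1 :&: val p.2 by rewrite inE xs xt.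
    by rewrite st inE.
case: (boolP (val a \subset W)) => aW //=; case: (boolP (val b \subset W)) => bW //=.
rewrite aW bW /= in hc.
case: (boolP (val a :&: val b == set0)) => // /eqP ab.
move: hc; rewrite (_ : (val a :\ v) :&: (val b :\ v) = set0) ?eqxx //.
apply/setP=> x; rewrite !inE; apply/negbTE/negP=> /andP[/andP[_ xa] /andP[_ xb]].
have : x \in val a :&: val b by rewrite inE xa xb.
by rewrite ab inE.
Qed.

Lemma csum n k (W : {set 'I_n}) (v : 'I_n) (a b : simplex n k) :
  \sum_(s : simplex n k) \sum_(t : simplex n k)
     ind [&& val s \subset W, val t \subset W, val s :&: val t == set0,
             v \notin val s, v \notin val t & (enum_rank s < enum_rank t)%N]
     * ind (val a \subset v |: val s) * ind (val b \subset v |: val t)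
  + \sum_(s : simplex n k) \sum_(t : simplex n k)
     ind [&& val s \subset W, val t \subset W, val s :&: val t == set0,
             v \notin val s, v \notin val t & (enum_rank s < enum_rank t)%N]
     * ind (val b \subset v |: val s) * ind (val a \subset v |: val t)
  = \sum_(s : simplex n k) \sum_(t : simplex n k)
     ind [&& val s \subset W, val t \subset W, val s :&: val t == set0,
             v \notin val s & v \notin val t]
     * ind (val a \subset v |: val s) * ind (val b \subset v |: val t).
Proof.
rewrite [X in _ + X]exchange_big /= -big_split /=; apply: eq_bigr => s _.
rewrite -big_split /=; apply: eq_bigr => t _.
rewrite [X in _ + X]mulrAC -!mulrDl; congr (_ * _ * _).
have [h|h] := boolP [&& val s \subset W, val t \subset W, val s :&: val t == set0,
             v \notin val s & v \notin val t].
  case/and5P: (h) => sW tW st vs vt.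
  rewrite sW tW st vs vt setIC st /=.
  have nst : s != t.
    apply/negP=> /eqP e; move: st; rewrite e setIid => /eqP t0.
    by move: (eqP (valP t)); rewrite t0 cards0.
  case: (ltngtP (enum_rank s) (enum_rank t)) => hr.
  - by rewrite ind1 ind0 addr0.
  - by rewrite ind1 ind0 add0r.
  - by move: nst; rewrite (enum_rank_inj (val_inj hr)) eqxx.
have -> : [&& val s \subset W, val t \subset W, val s :&: val t == set0,
             v \notin val s, v \notin val t & (enum_rank s < enum_rank t)%N] = false.
  apply/negbTE; apply: contra h => /and5P[sW tW st vs /andP[vt _]].
  by rewrite sW tW st vs vt.
have -> : [&& val t \subset W, val s \subset W, val t :&: val s == set0,
             v \notin val t, v \notin val s & (enum_rank t < enum_rank s)%N] = false.
  apply/negbTE; apply: contra h => /and5P[tW sW ts vt /andP[vs _]].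
  by rewrite sW tW setIC ts vs vt.
by rewrite ind0 addr0.
Qed.

Lemma caa n k (hk : (0 < k)%N) (W : {set 'I_n}) (v : 'I_n) (a : simplex n k) :
  \sum_(s : simplex n k) \sum_(t : simplex n k)
     ind [&& val s \subset W, val t \subset W, val s :&: val t == set0,
             v \notin val s, v \notin val t & (enum_rank s < enum_rank t)%N]
     * ind (val a \subset v |: val s) * ind (val a \subset v |: val t) = 0.
Proof.
apply: big1 => s _; apply: big1 => t _.
case: (boolP (val a \subset v |: val s)) => aS; last by rewrite ind0 mulr0 mul0r.
case: (boolP (val a \subset v |: val t)) => aT; last by rewrite ind0 mulr0.
case: (boolP (val s :&: val t == set0)) => st; last by rewrite /= !andbF ind0 !mul0r.
exfalso.
have e : val a :\ v = set0.
  apply/setP=> x; rewrite !inE; apply/negP => /andP[xv xa].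
  move: (subsetP aS x xa) (subsetP aT x xa); rewrite !inE (negbTE xv) /= => xs xt.
  have : x \in val s :&: val t by rewrite inE xs xt.
  by rewrite (eqP st) inE.
move: (cardsD1 v (val a)); rewrite e cards0 (eqP (valP a)).
case: (v \in val a) => /=; lia.
Qed.

Theorem lemma17 (k n : nat) (Hk : (0 < k)%N)
  (H : lmodType 'F_2) (Omega : H -> H -> 'F_2)
  (OmegaD : forall x y z, Omega (x + y) z = Omega x z + Omega y z)
  (OmegaZ : forall (a : 'F_2) x y, Omega (a *: x) y = a * Omega x y)
  (OmegaC : forall x y, Omega x y = Omega y x)
  (psi : {linear chain n.+1 k -> H})
  (W : {set 'I_n.+1}) (HW : #|W| = (2 * k + 3)%N)
  (v : 'I_n.+1) (Hv : v \in W) :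
  \sum_(s : simplex n.+1 k) \sum_(t : simplex n.+1 k |
        [&& val s \subset W, val t \subset W,
            val s :&: val t == set0 & (enum_rank s < enum_rank t)%N])
     Omega (psi (echain s)) (psi (echain t))
  =
  \sum_(s : simplex n.+1 k) \sum_(t : simplex n.+1 k |
        [&& val s \subset W, val t \subset W,
            val s :&: val t == set0, v \notin val s, v \notin val t
          & (enum_rank s < enum_rank t)%N])
     Omega (psi (bnd k (v |: val s))) (psi (bnd k (v |: val t))).
Proof.
pose g (a b : simplex n.+1 k) := Omega (psi (echain a)) (psi (echain b)).
have gC : forall a b, g a b = g b a by move=> a b; rewrite /g OmegaC.
have Om0 : forall y, Omega 0 y = 0.
  by move=> y; have := OmegaZ 0 0 y; rewrite scale0r mul0r.
have OmS : forall (I : finType) (P : pred I) (F : I -> H) y,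
    Omega (\sum_(i | P i) F i) y = \sum_(i | P i) Omega (F i) y.
  by move=> I P F y; apply: (big_morph (Omega^~ y) (fun a b => OmegaD a b y) (Om0 y)).
have G : forall X Y, Omega (psi (bnd k X)) (psi (bnd k Y)) =
    \sum_(a : simplex n.+1 k) \sum_(b : simplex n.+1 k) ind (val a \subset X) * ind (val b \subset Y) * g a b.
  move=> X Y; rewrite !bndE !raddf_sum OmS big_ind; apply: eq_bigr => a _.
  rewrite OmegaC OmS big_ind mulr_sumr; apply: eq_bigr => b _.
  by rewrite mulrA OmegaC.
pose c (a b : simplex n.+1 k) := \sum_(s : simplex n.+1 k) \sum_(t : simplex n.+1 k)
     ind [&& val s \subset W, val t \subset W, val s :&: val t == set0,
             v \notin val s, v \notin val t & (enum_rank s < enum_rank t)%N]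
     * ind (val a \subset v |: val s) * ind (val b \subset v |: val t).
transitivity (\sum_a \sum_b c a b * g a b); last first.
  under [RHS]eq_bigr do rewrite big_ind.
  under [RHS]eq_bigr do under eq_bigr do rewrite G mulr_sumr.
  under [RHS]eq_bigr do under eq_bigr do under eq_bigr do rewrite mulr_sumr.
  rewrite [RHS]swap4; apply: eq_bigr => a _; apply: eq_bigr => b _.
  rewrite /c mulr_suml; apply: eq_bigr => s _; rewrite mulr_suml; apply: eq_bigr => t _.
  by rewrite !mulrA.
rewrite sym_split // [X in _ + X]big1 ?addr0; last first.
  by move=> a _; rewrite /c caa // mul0r.
apply: eq_bigr => a _; rewrite big_ind; apply: eq_bigr => b _; congr (_ * _).
rewrite /c csum count_PP //.
by case: (enum_rank a < enum_rank b)%N; rewrite ?ind0 ?ind1 ?mul0r ?mul1r ?andbF ?andbT.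
Qed.
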